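(* There exists a constant $C>0$ such that for all integers $n\geq2$ and all $p\in[0,1]$, $$\frac{1}{n-1}\,\mathbb{E}_{n,p}[\tau]\leq C.$$
   Context: $G(n,p)$ is the Erdős–Rényi random graph on $[n]=\{1,\dots,n\}$ with independent edge probability $p$. Given a realization, $(X_t)_{t\ge0}$ is the simple symmetric random walk with $X_0=1$ and $\tau=\inf\{t\ge1:X_t=1\}$, with the convention $\tau=1$ if vertex $1$ is isolated. $\mathbb{E}_{n,p}[\tau]$ is the expectation of $\tau$ over both the walk and the random graph. *)

(* Defs.v *)
From HB Require Import structures.
From mathcomp Require Import all_boot all_order all_algebra.
From mathcomp Require Import all_classical all_reals.
From mathcomp Require Import ereal sequences.
Set Implicit Arguments. Unset Strict Implicit. Unset Printing Implicit Defensive.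
Import Order.TTheory GRing.Theory Num.Theory.
Local Open Scope ring_scope.

Section GnpWalk.
Variable R : realType.
Variable n : nat.

(* A graph on the vertex set 'I_n (representing [n] = {1,..,n}) given by its
   adjacency relation; G(n,p) only produces simple graphs. *)
Definition graph := {ffun 'I_n * 'I_n -> bool}.

Definition simple_graph (g : graph) : bool :=
  [forall i, ~~ g (i, i)] && [forall i, forall j, g (i, j) == g (j, i)].

Definition gnp_prob (p : R) (g : graph) : R :=
  \prod_(ij : 'I_n * 'I_n | (ij.1 < ij.2)%N) (if g ij then p else 1 - p).

Definition deg (g : graph) (i : 'I_n) : nat := #|[set j | g (i, j)]|.

Definition trans (g : graph) (i j : 'I_n) : R :=
  if g (i, j) then (deg g i)%:R^-1 else 0.

Fixpoint path_prob (g : graph) (x : 'I_n) (s : seq 'I_n) : R :=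
  if s is y :: s' then trans g x y * path_prob g y s' else 1.

(* P(tau > t) for the walk started at v0, tau = inf{t >= 1 : X_t = v0}:
   the walk avoids v0 at times 1..t.  If v0 is isolated all transition
   probabilities out of v0 vanish, so P(tau > t) = 0 for t >= 1, i.e. the
   convention tau = 1. *)
Definition tail_prob (g : graph) (v0 : 'I_n) (t : nat) : R :=
  \sum_(s : t.-tuple 'I_n | all (fun v => v != v0) s) path_prob g v0 s.

(* E[tau] = sum_{t >= 0} P(tau > t)  (value in the extended reals, +oo allowed) *)
Definition exp_return (g : graph) (v0 : 'I_n) : \bar R :=
  (\sum_(0 <= t <oo) (tail_prob g v0 t)%:E)%E.

Definition gnp_exp_return (p : R) (v0 : 'I_n) : \bar R :=
  (\sum_(g : graph | simple_graph g) (gnp_prob p g)%:E * exp_return g v0)%E.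

End GnpWalk.

(* Main.v *)
Require Import Defs.
From HB Require Import structures.
From mathcomp Require Import all_boot all_order all_algebra.
From mathcomp Require Import all_classical all_reals.
From mathcomp Require Import ereal sequences.
From mathcomp Require Import ring lra.
From mathcomp Require Import normedtype.
Import Order.TTheory GRing.Theory Num.Theory.
Local Open Scope ring_scope.

Section PerGraph.
Variable R : realType.
Variable n : nat.
Variable v0 : 'I_n.

Definition Kop (g : graph n) (phi : 'I_n -> R) (x : 'I_n) : R :=
  \sum_(y | y != v0) trans R g x y * phi y.

Lemma tail_iter (g : graph n) t x :
  \sum_(s : t.-tuple 'I_n | all (fun v => v != v0) s) path_prob R g x s =
  iter t (Kop g) (fun _ => 1) x.
Proof.
elim: t x => [|t IH] x /=.
  by rewrite (big_pred1 [tuple]) // => s; rewrite [s]tuple0 /=; apply/esym/eqP.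
rewrite (reindex (fun p : 'I_n * t.-tuple 'I_n => [tuple of p.1 :: p.2])) /=; last first.
  exists (fun s : t.+1.-tuple 'I_n => (thead s, [tuple of behead s])).
    by move=> [y s] _ /=; congr pair; apply: val_inj.
  by move=> s _ /=; rewrite -tuple_eta.
rewrite -(pair_big_dep (fun y => y != v0) (fun y (s : t.-tuple 'I_n) => all (fun v => v != v0) s)
   (fun y (s : t.-tuple 'I_n) => trans R g x y * path_prob R g y s)) /=.
rewrite /Kop; apply: eq_bigr => y _.
by rewrite -mulr_sumr IH.
Qed.


Section Simple.
Variable g : graph n.
Hypothesis sg : simple_graph g.

Lemma g_irr i : g (i, i) = false.
Proof. by case/andP: sg => /forallP /(_ i) /negPf. Qed.

Lemma g_sym i j : g (i, j) = g (j, i).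
Proof. by case/andP: sg => _ /forallP /(_ i) /forallP /(_ j) /eqP. Qed.

Lemma degE i : (deg g i)%:R = \sum_j (g (i, j))%:R :> R.
Proof.
rewrite /deg -sum1dep_card natr_sum big_mkcond /=.
by apply: eq_bigr => j _; case: (g (i, j)).
Qed.

Lemma transE x y : trans R g x y = (g (x, y))%:R * (deg g x)%:R^-1.
Proof. by rewrite /trans; case: (g _); rewrite ?mul1r ?mul0r. Qed.

Lemma trans_ge0 x y : 0 <= trans R g x y.
Proof. by rewrite transE mulr_ge0 // invr_ge0. Qed.

Lemma deg_trans x y : (deg g x)%:R * trans R g x y = (g (x, y))%:R.
Proof.
rewrite /trans; case gxy: (g (x, y)); last by rewrite mulr0.
have : (0 < deg g x)%N by apply/card_gt0P; exists y; rewrite inE.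
by move=> d0; rewrite mulfV // pnatr_eq0 -lt0n.
Qed.

Lemma sum_trans x : \sum_y trans R g x y <= 1.
Proof.
under eq_bigr do rewrite transE.
rewrite -mulr_suml -degE.
have [->|d0] := eqVneq ((deg g x)%:R : R) 0; first by rewrite mul0r ler01.
by rewrite mulfV.
Qed.

Definition ip (phi psi : 'I_n -> R) := \sum_(x | x != v0) (deg g x)%:R * phi x * psi x.

Lemma Kop_adj phi psi : ip (Kop g phi) psi = ip phi (Kop g psi).
Proof.
rewrite /ip /Kop.
transitivity (\sum_(x | x != v0) \sum_(y | y != v0) (g (x, y))%:R * phi y * psi x).
  apply: eq_bigr => x _; rewrite mulr_sumr mulr_suml; apply: eq_bigr => y _.
  by rewrite -deg_trans; ring.
rewrite exchange_big /=; apply: eq_bigr => y _.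
rewrite mulr_sumr; apply: eq_bigr => x _.
by rewrite g_sym -deg_trans; ring.
Qed.

Lemma iter_adj t phi psi : ip (iter t (Kop g) phi) psi = ip phi (iter t (Kop g) psi).
Proof.
elim: t phi psi => [|t IH] phi psi //=.
by rewrite Kop_adj IH -iterSr.
Qed.


Lemma iter_ge0 t phi x : (forall y, 0 <= phi y) -> 0 <= iter t (Kop g) phi x.
Proof.
move=> h; elim: t x => [|t IH] x //=.
by apply: sumr_ge0 => y _; rewrite mulr_ge0 // trans_ge0.
Qed.

Lemma Kop_sum T (F : nat -> 'I_n -> R) x :
  Kop g (fun y => \sum_(0 <= t < T) F t y) x = \sum_(0 <= t < T) Kop g (F t) x.
Proof.
rewrite /Kop exchange_big /=; apply: eq_bigr => y _; by rewrite mulr_sumr.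
Qed.

Definition rr := fun x => trans R g x v0.

Lemma F_le1 T x : \sum_(0 <= t < T) iter t (Kop g) rr x <= 1.
Proof.
elim: T x => [|T IH] x; first by rewrite big_geq // ler01.
rewrite big_nat_recl //=.
rewrite -Kop_sum.
apply: le_trans (sum_trans x).
rewrite (bigD1 v0) //= lerD2l /Kop; apply: ler_sum => y _.
by rewrite -[X in _ <= X]mulr1 ler_wpM2l ?trans_ge0 ?IH.
Qed.

Lemma F_ge0 T x : 0 <= \sum_(0 <= t < T) iter t (Kop g) rr x.
Proof. by apply: sumr_ge0 => t _; apply: iter_ge0 => y; apply: trans_ge0. Qed.

Lemma tail_step t :
  iter t.+1 (Kop g) (fun _ => 1) v0 =
  (deg g v0)%:R^-1 * ip (iter t (Kop g) rr) (fun _ => 1).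
Proof.
rewrite iter_adj /= /Kop /ip mulr_sumr; apply: eq_bigr => y _.
rewrite /rr transE g_sym -deg_trans; ring.
Qed.

Definition Bnd := 1 + (deg g v0)%:R^-1 * \sum_(x | x != v0) (deg g x)%:R : R.

Lemma partial_le T : \sum_(0 <= t < T) tail_prob R g v0 t <= Bnd.
Proof.
have B1 : 1 <= Bnd.
  rewrite /Bnd lerDl mulr_ge0 // ?invr_ge0 //; exact: sumr_ge0.
case: T => [|T]; first by rewrite big_geq // (le_trans ler01).
rewrite big_nat_recl // /tail_prob.
under eq_bigr do rewrite tail_iter tail_step.
rewrite tail_iter /= /Bnd lerD2l -mulr_sumr ler_wpM2l ?invr_ge0 //.
rewrite /ip exchange_big /=; apply: ler_sum => x _.
under eq_bigr do rewrite mulr1.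
rewrite -mulr_sumr -[X in _ <= X]mulr1 ler_wpM2l //.
exact: F_le1.
Qed.


Lemma tail_ge0 t : 0 <= tail_prob R g v0 t.
Proof. by rewrite /tail_prob tail_iter; apply: iter_ge0. Qed.

Lemma exp_le : (exp_return R g v0 <= Bnd%:E)%E.
Proof.
rewrite /exp_return; apply: lime_le.
  by apply: is_cvg_nneseries => k _ _; rewrite lee_fin tail_ge0.
by apply: nearW => k; rewrite sumEFin lee_fin; apply: partial_le.
Qed.

End Simple.
End PerGraph.

Section Param.
Variable R : realType.
Variable n : nat.

Definition Apair : {pred 'I_n * 'I_n} := [pred ij : 'I_n * 'I_n | (ij.1 < ij.2)%N].
Definition PT := {x in Apair}.

Definition hf (f : {ffun PT -> bool}) : graph n :=
  [ffun ij => if @insub _ (mem Apair) PT ij is Some x then f x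
              else if @insub _ (mem Apair) PT (ij.2, ij.1) is Some x then f x else false].

Definition rf (g : graph n) : {ffun PT -> bool} := [ffun x => g (val x)].

Lemma hf_val f x : hf f (val x) = f x.
Proof. by rewrite /hf ffunE valK. Qed.

Lemma hf_simple f : simple_graph (hf f).
Proof.
apply/andP; split.
  apply/forallP => i; rewrite /hf ffunE /=.
  case: (@insubP _ (mem Apair) PT (i, i)) => [u|] /=; first by rewrite inE /= ltnn.
  by [].
apply/forallP => i; apply/forallP => j; rewrite /hf !ffunE /=.
case: (@insubP _ (mem Apair) PT (i, j)) => [u|]; rewrite ?inE /= => hij;
case: (@insubP _ (mem Apair) PT (j, i)) => [w|]; rewrite ?inE /= => hji //.
by move: (ltn_trans hij hji); rewrite ltnn.
Qed.

Lemma hfK g : simple_graph g -> hf (rf g) = g.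
Proof.
move=> sg; apply/ffunP => -[i j]; rewrite /hf !ffunE /=.
case: insubP => [u|]; rewrite ?inE /= => hij.
  by move=> vu; rewrite ffunE; exact: (congr1 g vu).
case: insubP => [u|]; rewrite ?inE /= => hji.
  by move=> vu; rewrite ffunE (@g_sym _ _ sg); exact: (congr1 g vu).
have -> : i = j by apply: val_inj; apply/eqP; rewrite eqn_leq leqNgt hji /= leqNgt hij.
by rewrite (@g_irr _ _ sg).
Qed.

Lemma rfK f : rf (hf f) = f.
Proof. by apply/ffunP => x; rewrite ffunE hf_val. Qed.

Definition wt (p : R) (f : {ffun PT -> bool}) : R := \prod_(x : PT) (if f x then p else 1 - p).

Lemma conv (F : graph n -> R) :
  \sum_(g : graph n | simple_graph g) F g = \sum_(f : {ffun PT -> bool}) F (hf f).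
Proof.
rewrite (reindex_onto hf rf hfK); apply: eq_bigl => f.
by rewrite hf_simple rfK eqxx.
Qed.

Lemma gnp_hf p f : gnp_prob p (hf f) = wt p f.
Proof.
rewrite /gnp_prob /wt.
rewrite (eq_bigl (fun ij => ij \in Apair)) //.
rewrite big_sub; apply: eq_bigr => x _; by rewrite hf_val.
Qed.

Lemma wt_sum p : \sum_(f : {ffun PT -> bool}) wt p f = 1.
Proof.
rewrite /wt -(bigA_distr_bigA (fun (x : PT) (b : bool) => if b then p else 1 - p)).
by apply: big1 => x _; rewrite big_bool /=; ring.
Qed.

Lemma wt_ge0 p f : 0 <= p <= 1 -> 0 <= wt p f.
Proof.
case/andP => p0 p1; apply: prodr_ge0 => x _; case: (f x) => //.
by rewrite subr_ge0.
Qed.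

End Param.

Section Toggle.
Variable R : realType.
Variable n : nat.
Variable p : R.
Variable x0 : PT n.
Local Notation W := (@wt R n p).

Definition setf (f : {ffun PT n -> bool}) : {ffun PT n -> bool} := [ffun x => (x == x0) || f x].
Definition tog (f : {ffun PT n -> bool}) : {ffun PT n -> bool} :=
  [ffun x => if x == x0 then ~~ f x else f x].

Lemma togK : involutive tog.
Proof.
move=> f; apply/ffunP => x; rewrite !ffunE; case: eqP => // _; exact: negbK.
Qed.

Definition wt' (f : {ffun PT n -> bool}) : R :=
  \prod_(x | x != x0) (if f x then p else 1 - p).

Lemma wtD (f : {ffun PT n -> bool}) : W f = (if f x0 then p else 1 - p) * wt' f.
Proof. by rewrite /W /wt (bigD1 x0). Qed.

Lemma wt'_tog (f : {ffun PT n -> bool}) : wt' (tog f) = wt' f.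
Proof. by apply: eq_bigr => x /negPf hx; rewrite ffunE hx. Qed.

Lemma wt'_set (f : {ffun PT n -> bool}) : wt' (setf f) = wt' f.
Proof. by apply: eq_bigr => x /negPf hx; rewrite ffunE hx. Qed.

Lemma setf_id (f : {ffun PT n -> bool}) : f x0 -> setf f = f.
Proof. by move=> h; apply/ffunP => x; rewrite ffunE; case: eqP => // ->. Qed.

Lemma setf_tog (f : {ffun PT n -> bool}) : f x0 -> setf (tog f) = f.
Proof.
move=> h; apply/ffunP => x; rewrite !ffunE; case: eqP => //= ->; by rewrite h.
Qed.

Lemma toggle (phi : {ffun PT n -> bool} -> R) :
  \sum_(f : {ffun PT n -> bool}) W f * (f x0)%:R * phi f =
  p * \sum_(f : {ffun PT n -> bool}) W f * phi (setf f).
Proof.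
rewrite (bigID (fun f : {ffun PT n -> bool} => f x0)) /= [X in _ = _ * X](bigID (fun f : {ffun PT n -> bool} => f x0)) /=.
rewrite [X in _ + X]big1; last by move=> f /negPf ->; rewrite mulr0 mul0r.
rewrite addr0 [X in _ = _ * (_ + X)](reindex_inj (can_inj togK)) /=.
have -> : \sum_(f : {ffun PT n -> bool} | ~~ tog f x0) W (tog f) * phi (setf (tog f)) =
          \sum_(f : {ffun PT n -> bool} | f x0) (1 - p) * wt' f * phi f.
  apply: eq_big => [f|f]; first by rewrite /tog ffunE eqxx negbK.
  have E : tog f x0 = ~~ f x0 by rewrite /tog ffunE eqxx.
  rewrite E negbK => fx0.
  by rewrite wtD wt'_tog setf_tog // E fx0.
rewrite -big_split /= mulr_sumr; apply: eq_bigr => f fx0.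
rewrite wtD fx0 setf_id //= mulr1; ring.
Qed.

End Toggle.

Arguments hf {n}. Arguments rf {n}. Arguments conv {R n}. Arguments gnp_hf {R n}.
Arguments wt {R n}. Arguments hf_val {n}. Arguments setf {n}. Arguments tog {n}.
Arguments toggle {R n}. Arguments wt_sum {R n}. Arguments wt_ge0 {R n}.

Section GT.
Variable R : realType.
Variable n : nat.
Variable p : R.

Definition setE (a b : 'I_n) (g : graph n) : graph n :=
  [ffun ij => (ij == (a, b)) || (ij == (b, a)) || g ij].

Lemma hf_setf a b (hab : (a, b) \in Apair n) f :
  hf (setf (Sub (a, b) hab : PT n) f) = setE a b (hf f).
Proof.
have ab : (a < b)%N := hab.
apply/ffunP => -[i j]; rewrite /hf /setE !ffunE /=.
case: (@insubP _ (mem (Apair n)) (PT n) (i, j)) => [u|]; rewrite ?inE /= => hij.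
  move=> vu; rewrite ffunE.
  have -> : (u == Sub (a, b) hab) = ((i, j) == (a, b)) by rewrite -val_eqE /= vu.
  have -> : ((i, j) == (b, a)) = false.
    apply/negbTE/eqP => -[ei ej]; move: hij; rewrite ei ej => /(ltn_trans ab).
    by rewrite ltnn.
  by rewrite orbF.
have -> : ((i, j) == (a, b)) = false.
  apply/negbTE/eqP => -[ei ej]; move: hij; rewrite ei ej ab.
  by [].
case: (@insubP _ (mem (Apair n)) (PT n) (j, i)) => [w|]; rewrite ?inE /= => hji.
  move=> vw; rewrite ffunE.
  have -> : (w == Sub (a, b) hab) = ((i, j) == (b, a)).
    rewrite -val_eqE /= vw !xpair_eqE; exact: andbC.
  by [].
have -> : ((i, j) == (b, a)) = false.
  apply/negbTE/eqP => -[ei ej]; move: hji; rewrite ei ej ab.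
  by [].
by [].
Qed.

Lemma toggleG_lt a b (hab : (a, b) \in Apair n) (phi : graph n -> R) :
  \sum_(g : graph n | simple_graph g) gnp_prob p g * (g (a, b))%:R * phi g =
  p * \sum_(g : graph n | simple_graph g) gnp_prob p g * phi (setE a b g).
Proof.
rewrite (conv (fun g => gnp_prob p g * (g (a, b))%:R * phi g)).
rewrite (conv (fun g => gnp_prob p g * phi (setE a b g))).
pose x0 : PT n := Sub (a, b) hab.
have -> : \sum_(f : {ffun PT n -> bool}) gnp_prob p (hf f) * (hf f (a, b))%:R * phi (hf f)
        = \sum_(f : {ffun PT n -> bool}) wt p f * (f x0)%:R * phi (hf f).
  by apply: eq_bigr => f _; rewrite gnp_hf -(hf_val f x0).
rewrite (toggle p x0 (fun f => phi (hf f))); congr (_ * _).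
apply: eq_bigr => f _; by rewrite gnp_hf hf_setf.
Qed.

End GT.

Arguments setE {n}. Arguments g_sym {n g}. Arguments g_irr {n g}. Arguments toggleG_lt {R n}.

Section Final.
Variable R : realType.
Variable n : nat.
Variable p : R.
Hypothesis hp : 0 <= p <= 1.

Local Notation SG := (fun g : graph n => simple_graph g).

Lemma gnp_ge0 (g : graph n) : 0 <= gnp_prob p g.
Proof.
case/andP: hp => p0 p1; apply: prodr_ge0 => x _; case: (g x) => //.
by rewrite subr_ge0.
Qed.

Lemma gnp_sum : \sum_(g : graph n | simple_graph g) gnp_prob p g = 1.
Proof.
rewrite (conv (fun g => gnp_prob p g)).
under eq_bigr do rewrite gnp_hf.
exact: wt_sum.
Qed.

Lemma toggleG (a b : 'I_n) (ab : a != b) (phi : graph n -> R) :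
  \sum_(g : graph n | simple_graph g) gnp_prob p g * (g (a, b))%:R * phi g =
  p * \sum_(g : graph n | simple_graph g) gnp_prob p g * phi (setE a b g).
Proof.
case: (ltngtP a b) => [lt|gt|eq].
- have hab : (a, b) \in Apair n by rewrite inE.
  exact: toggleG_lt p _ _ hab phi.
- have hba : (b, a) \in Apair n by rewrite inE.
  have -> : setE a b = setE b a.
    apply: funext => g; apply/ffunP => ij; rewrite !ffunE.
    by rewrite [X in X || _ = _]orbC.
  rewrite -(toggleG_lt p _ _ hba phi); apply: eq_bigr => g sg.
  by rewrite (g_sym sg).
- by move: ab; rewrite (val_inj eq) eqxx.
Qed.

Variable v0 : 'I_n.
Local Notation D g := ((deg g v0)%:R : R).

Lemma deg_setE_other (x y : 'I_n) (g : graph n) : x != v0 -> y != v0 ->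
  deg (setE x y g) v0 = deg g v0.
Proof.
move=> hx hy; rewrite /deg; apply: eq_card => j.
rewrite !inE ffunE !xpair_eqE.
by rewrite (eq_sym v0 x) (eq_sym v0 y) (negbTE hx) (negbTE hy).
Qed.

Lemma deg_setE_v0 (u : 'I_n) (g : graph n) : u != v0 ->
  (0 < deg (setE v0 u g) v0)%N /\ (deg (setE v0 u g) v0 <= (deg g v0).+1)%N.
Proof.
move=> hu; split.
  by apply/card_gt0P; exists u; rewrite !inE ffunE eqxx.
rewrite /deg; apply: (@leq_trans #|u |: [set j | g (v0, j)]|).
  apply: subset_leq_card; apply/fintype.subsetP => j.
  rewrite !inE ffunE !xpair_eqE eqxx /= (eq_sym v0 u) (negbTE hu) /=.
  by rewrite orbF.
by rewrite cardsU1 -addn1 addnC leq_add2l leq_b1.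
Qed.

Lemma inv_setE (u : 'I_n) (g : graph n) : u != v0 ->
  (D g)^-1 <= 2 * (D (setE v0 u g))^-1.
Proof.
move=> hu; have [h1 h2] := deg_setE_v0 u g hu.
have [->|d0] := eqVneq (D g) 0.
  by rewrite invr0 mulr_ge0 // invr_ge0.
have Dp : 0 < D (setE v0 u g) by rewrite ltr0n.
have Dgp : 0 < D g by rewrite lt0r d0 /=.
have le2 : D (setE v0 u g) <= 2 * D g.
  have : (deg (setE v0 u g) v0 <= 2 * deg g v0)%N.
    apply: leq_trans h2 _; rewrite mul2n -addnn -addn1 leq_add2l.
    by rewrite lt0n -(eqr_nat R) d0.
  by rewrite -(ler_nat R) natrM.
set a := (D g)^-1; set b := (D (setE v0 u g))^-1.
have aD : a * D g = 1 by rewrite mulVf // gt_eqF.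
have bD : b * D (setE v0 u g) = 1 by rewrite mulVf // gt_eqF.
have a0 : 0 <= a by rewrite invr_ge0 ltW.
have b0 : 0 <= b by rewrite invr_ge0 ltW.
have := ler_wpM2l (mulr_ge0 a0 b0) le2.
rewrite -mulrA bD mulr1 => H; apply: (le_trans H).
have -> : a * b * (2 * D g) = 2 * b * (a * D g) by ring.
by rewrite aD mulr1.
Qed.

Lemma sum_deg (g : graph n) : simple_graph g ->
  \sum_(u | u != v0) (g (v0, u))%:R = D g :> R.
Proof.
by move=> sg; rewrite degE [X in _ = X](bigD1 v0) //= (g_irr sg) add0r.
Qed.

Lemma Bnd_eq (g : graph n) : simple_graph g ->
  Bnd R n v0 g = 1 + (D g)^-1 * D g +
    \sum_(x | x != v0) \sum_(y | y != v0) (g (x, y))%:R * (D g)^-1.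
Proof.
move=> sg; rewrite /Bnd.
have -> : \sum_(x | x != v0) ((deg g x)%:R : R) =
    D g + \sum_(x | x != v0) \sum_(y | y != v0) (g (x, y))%:R.
  under eq_bigr do rewrite degE (bigD1 v0) //=.
  rewrite big_split /=; congr (_ + _).
  rewrite -sum_deg //; apply: eq_bigr => x _; by rewrite g_sym.
rewrite mulrDr addrA mulr_sumr; congr (_ + _).
apply: eq_bigr => x _; rewrite mulr_sumr; apply: eq_bigr => y _; exact: mulrC.
Qed.

Lemma count_const (c : R) : \sum_(u : 'I_n | u != v0) c = (n - 1)%:R * c.
Proof.
rewrite (eq_bigl (fun u => u \in predC1 v0)) // sumr_const cardC1 card_ord.
by rewrite mulr_natl subn1.
Qed.

Lemma main_bound : (2 <= n)%N ->
  \sum_(g : graph n | simple_graph g) gnp_prob p g * Bnd R n v0 g <= 4 * (n - 1)%:R.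
Proof.
move=> n2.
case/andP: hp => p0 p1.
set N : R := (n - 1)%:R.
have N1 : 1 <= N by rewrite /N (ler_nat R 1) leq_subRL ?(ltnW n2).
set Q := \sum_(g : graph n | simple_graph g) gnp_prob p g * (D g)^-1.
set T1 := \sum_(g : graph n | simple_graph g) gnp_prob p g * ((D g)^-1 * D g).
have Q0 : 0 <= Q by apply: sumr_ge0 => g _; rewrite mulr_ge0 ?gnp_ge0 ?invr_ge0.
have T1le : T1 <= 1.
  rewrite -gnp_sum; apply: ler_sum => g _.
  rewrite -[X in _ <= X]mulr1 ler_wpM2l ?gnp_ge0 //.
  have [->|d0] := eqVneq (D g) 0; first by rewrite mulr0 ler01.
  by rewrite mulVf.
have pair (x y : 'I_n) : x != v0 -> y != v0 ->
    \sum_(g : graph n | simple_graph g) gnp_prob p g * ((g (x, y))%:R * (D g)^-1) <= p * Q.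
  move=> hx hy; case: (eqVneq x y) => [<-|xy].
    rewrite big1 ?mulr_ge0 // => g sg; by rewrite (g_irr sg) mul0r mulr0.
  under eq_bigr do rewrite mulrA.
  rewrite (toggleG _ _ xy (fun g => (D g)^-1)).
  rewrite /Q; rewrite le_eqVlt; apply/orP; left; apply/eqP; congr (_ * _); apply: eq_bigr => g _.
  by rewrite deg_setE_other.
have NpQ : N * (p * Q) <= 2 * T1.
  have step (u : 'I_n) : u != v0 -> p * Q <=
      2 * \sum_(g : graph n | simple_graph g) gnp_prob p g * ((g (v0, u))%:R * (D g)^-1).
    move=> hu; under eq_bigr do rewrite mulrA.
    have vu : v0 != u by rewrite eq_sym.
    rewrite (toggleG _ _ vu (fun g => (D g)^-1)) mulrA [2 * p]mulrC -mulrA.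
    rewrite ler_wpM2l // mulr_sumr; apply: ler_sum => g _.
    rewrite mulrCA ler_wpM2l ?gnp_ge0 //; exact: inv_setE.
  rewrite -count_const.
  apply: le_trans (ler_sum _ step) _.
  rewrite -mulr_sumr ler_wpM2l // exchange_big /= /T1; apply: ler_sum => g sg.
  by rewrite -mulr_sumr -mulr_suml sum_deg // [D g * _]mulrC.
rewrite (eq_bigr (fun g => gnp_prob p g * 1 + gnp_prob p g * ((D g)^-1 * D g) +
   \sum_(x | x != v0) \sum_(y | y != v0) gnp_prob p g * ((g (x, y))%:R * (D g)^-1)));
  last first.
  move=> g sg; rewrite Bnd_eq // !mulrDr mulr_sumr; congr (_ + _).
  apply: eq_bigr => x _; by rewrite mulr_sumr.
rewrite !big_split /= -/T1.
under eq_bigr do rewrite mulr1.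
rewrite gnp_sum exchange_big /=.
apply: (@le_trans _ _ (1 + T1 + N * (N * (p * Q)))).
  rewrite lerD2l -!count_const; apply: ler_sum => x hx.
  rewrite exchange_big /=; apply: ler_sum => y hy; exact: pair.
have N0 : 0 <= N by apply: le_trans N1.
have h := ler_wpM2l N0 NpQ.
nra.
Qed.

End Final.


Theorem lemma2 (R : realType) :
  exists C : R, 0 < C /\
    forall (n : nat) (hn : (2 <= n)%N) (p : R), 0 <= p <= 1 ->
      (((n - 1)%:R)^-1%:E * gnp_exp_return p (Ordinal (ltnW hn)) <= C%:E)%E.
Proof.
exists 4; split => // n hn p hp.
set v0 := Ordinal (ltnW hn).
have N0 : (0 : R) < (n - 1)%:R by rewrite ltr0n subn_gt0.
have H : (gnp_exp_return p v0 <= (4 * (n - 1)%:R)%:E)%E.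
  apply: le_trans (_ : (\sum_(g : graph n | simple_graph g) gnp_prob p g * Bnd R n v0 g)%:E <= _)%E; last first.
    by rewrite lee_fin; apply: main_bound.
  rewrite /gnp_exp_return -sumEFin; apply: lee_sum => g sg.
  rewrite EFinM; apply: lee_wpmul2l; first by rewrite lee_fin gnp_ge0.
  exact: exp_le.
apply: le_trans (lee_wpmul2l _ H) _; first by rewrite lee_fin invr_ge0 ltW.
by rewrite -EFinM lee_fin mulrCA mulVf ?gt_eqF // mulr1.
Qed.
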